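(* Let $(\mathfrak{A},\varphi,\tau)$ be an ergodic $*$-dynamical system, and let $A,B\in\mathfrak{A}$ and $\varepsilon>0$. Then the set $$E=\left\{k\in\mathbb{N}:\left|\varphi\left(A\tau^{k}(B)\right)\right|>\left|\varphi(A)\varphi(B)\right|-\varepsilon\right\}$$ is relatively dense in $\mathbb{N}=\{1,2,3,\dots\}$.
   Context: All algebras are over $\mathbb{C}$. A unital $*$-algebra is a complex algebra with an involution $*$ and a unit $1$. A state on a unital $*$-algebra $\mathfrak{A}$ is a linear functional $\varphi$ with $\varphi(A^*A)\ge 0$ for all $A$ and $\varphi(1)=1$. A $*$-dynamical system is a triple $(\mathfrak{A},\varphi,\tau)$ where $\mathfrak{A}$ is a unital $*$-algebra, $\varphi$ is a state on $\mathfrak{A}$, and $\tau:\mathfrak{A}\to\mathfrak{A}$ is a linear map (not necessarily multiplicative) with $\tau(1)=1$ and $\varphi(\tau(A)^*\tau(A))\le\varphi(A^*A)$ for all $A\in\mathfrak{A}$. Define the seminorm $\|A\|_\varphi=\sqrt{\varphi(A^*A)}$; scalars $\alpha\in\mathbb{C}$ are identified with $\alpha 1\in\mathfrak{A}$. The system is called ergodic if: for every sequence $(A_n)$ in $\mathfrak{A}$ such that $\|\tau(A_n)-A_n\|_\varphi\to0$ and such that for every $\varepsilon>0$ there is $N$ with $\|A_m-A_n\|_\varphi\le\varepsilon$ for all $m,n>N$, there exists $\alpha\in\mathbb{C}$ with $\|A_n-\alpha\|_\varphi\to0$. A set $E\subseteq\mathbb{N}$ is relatively dense in $\mathbb{N}$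 if there exists $n\in\mathbb{N}$ such that $E\cap\{j,j+1,\dots,j+n-1\}\neq\emptyset$ for every $j\in\mathbb{N}$. *)

(* Defs.v *)
(* the complex numbers are R[i] = complex R for R : realType
   (real-closed's complex.v); any realType is (isomorphic to) the reals. *)
From HB Require Import structures.
From mathcomp Require Import all_boot all_order all_algebra.
From mathcomp Require Import complex.
From mathcomp Require Import reals.
Set Implicit Arguments. Unset Strict Implicit. Unset Printing Implicit Defensive.
Import Order.TTheory GRing.Theory Num.Theory.
Local Open Scope ring_scope.

Section StarDyn.
Variable R : realType.
Local Notation C := (R[i]).
Variable A : algType C.

Definition is_involution (star : A -> A) : Prop :=
  [/\ forall x y, star (x + y) = star x + star y,
      forall (c : C) x, star (c *: x) = (c^*)%C *: star x,
      forall x y, star (x * y) = star y * star x &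
      forall x, star (star x) = x].

Definition is_state (star : A -> A) (phi : A -> C) : Prop :=
  [/\ forall x y, phi (x + y) = phi x + phi y,
      forall (c : C) x, phi (c *: x) = c * phi x,
      forall x, 0 <= phi (star x * x) &
      phi 1 = 1].

Definition phinorm (star : A -> A) (phi : A -> C) (x : A) : R :=
  Num.sqrt (complex.Re (phi (star x * x))).

Definition is_star_dyn (star : A -> A) (phi : A -> C) (tau : A -> A) : Prop :=
  [/\ is_involution star, is_state star phi,
      (forall x y, tau (x + y) = tau x + tau y) /\
        (forall (c : C) x, tau (c *: x) = c *: tau x),
      tau 1 = 1 &
      forall x, phi (star (tau x) * tau x) <= phi (star x * x)].

Definition ergodic (star : A -> A) (phi : A -> C) (tau : A -> A) : Prop :=
  forall An : nat -> A,
    (forall e : R, 0 < e -> exists N : nat, forall n : nat, (N < n)%N ->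
        phinorm star phi (tau (An n) - An n) <= e) ->
    (forall e : R, 0 < e -> exists N : nat, forall m n : nat,
        (N < m)%N -> (N < n)%N -> phinorm star phi (An m - An n) <= e) ->
    exists alpha : C,
      forall e : R, 0 < e -> exists N : nat, forall n : nat, (N < n)%N ->
        phinorm star phi (An n - alpha%:A) <= e.

End StarDyn.

Definition rel_dense_pos (E : nat -> Prop) : Prop :=
  exists n : nat, (0 < n)%N /\
    forall j : nat, (0 < j)%N ->
      exists k : nat, E k /\ (j <= k)%N /\ (k <= j + n - 1)%N.

Definition cabs (R : realType) (z : R[i]) : R := Normc.normc z.

(* Main.v *)
Require Import Defs.
From HB Require Import structures.
From mathcomp Require Import all_boot all_order all_algebra.
From mathcomp Require Import complex.
From mathcomp Require Import boolp classical_sets reals.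
From mathcomp Require Import ring lra zify.
Import Order.TTheory GRing.Theory Num.Theory.
Local Open Scope complex_scope.
Local Open Scope ring_scope.
Set Implicit Arguments. Unset Strict Implicit. Unset Printing Implicit Defensive.

Section S.
Variable R : realType.
Local Notation C := R[i].
Local Notation Re := complex.Re.
Local Notation Im := complex.Im.
Variable A : algType C.
Variables (star : A -> A) (phi : A -> C) (tau : A -> A).
Hypothesis Hdyn : is_star_dyn star phi tau.

Lemma tau_lin : linear tau.
Proof. by case: Hdyn => _ _ [tD tZ] _ _ c x y; rewrite tD tZ. Qed.
HB.instance Definition _ := GRing.isLinear.Build C A A *:%R tau tau_lin.
Lemma phi_lin : linear_for *%R phi.
Proof. by case: Hdyn => _ [pD pZ _ _] _ _ _ c x y; rewrite pD pZ. Qed.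
HB.instance Definition _ := GRing.isLinear.Build C A C *%R phi phi_lin.

Lemma sD x y : star (x + y) = star x + star y. Proof. by case: Hdyn => [[H _ _ _]]. Qed.
Lemma sZ c x : star (c *: x) = (c^*)%C *: star x. Proof. by case: Hdyn => [[_ H _ _]]. Qed.
Lemma sM x y : star (x*y) = star y * star x. Proof. by case: Hdyn => [[_ _ H _]]. Qed.
Lemma sK x : star (star x) = x. Proof. by case: Hdyn => [[_ _ _ H]]. Qed.
Lemma pZ c x : phi (c *: x) = c * phi x. Proof. by case: Hdyn => _ [_ H _ _]. Qed.
Lemma pge0 x : 0 <= phi (star x * x). Proof. by case: Hdyn => _ [_ _ H _]. Qed.
Lemma p1 : phi 1 = 1. Proof. by case: Hdyn => _ [_ _ _ H]. Qed.
Lemma t1 : tau 1 = 1. Proof. by case: Hdyn. Qed.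
Lemma tC x : phi (star (tau x) * tau x) <= phi (star x * x). Proof. by case: Hdyn => _ _ _ _ H. Qed.

Lemma s0 : star 0 = 0.
Proof. by rewrite -[0 : A](scale0r (0 : A)) sZ conjc0 !scale0r. Qed.
Lemma sN x : star (- x) = - star x.
Proof. by rewrite -scaleN1r sZ rmorphN1 scaleN1r. Qed.
Lemma sB x y : star (x - y) = star x - star y.
Proof. by rewrite sD sN. Qed.
Lemma s1 : star 1 = 1.
Proof. by have := sM (star 1) 1; rewrite mulr1 !sK mulr1 => <-. Qed.

Definition ip x y := phi (star x * y).
Lemma ipDr x y z : ip x (y + z) = ip x y + ip x z.
Proof. by rewrite /ip mulrDr raddfD. Qed.
Lemma ipDl x y z : ip (x + y) z = ip x z + ip y z.
Proof. by rewrite /ip sD mulrDl raddfD. Qed.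
Lemma ipZr c x y : ip x (c *: y) = c * ip x y.
Proof. by rewrite /ip -scalerAr pZ. Qed.
Lemma ipZl c x y : ip (c *: x) y = (c^*)%C * ip x y.
Proof. by rewrite /ip sZ -scalerAl pZ. Qed.
Lemma ipNr x y : ip x (- y) = - ip x y.
Proof. by rewrite /ip mulrN raddfN. Qed.
Lemma ipNl x y : ip (- x) y = - ip x y.
Proof. by rewrite /ip sN mulNr raddfN. Qed.
Lemma ipBr x y z : ip x (y - z) = ip x y - ip x z.
Proof. by rewrite ipDr ipNr. Qed.
Lemma ipBl x y z : ip (x - y) z = ip x z - ip y z.
Proof. by rewrite ipDl ipNl. Qed.
Lemma ip_ge0 x : 0 <= ip x x. Proof. exact: pge0. Qed.
Lemma ipIm x : Im (ip x x) = 0.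
Proof. by move: (ip_ge0 x); rewrite lecE => /andP[/eqP -> _]. Qed.
Lemma ip_herm x y : ip y x = ((ip x y)^*)%C.
Proof.
have H1 := ip_ge0 (x + y).
have H2 := ip_ge0 (x + 'i%C *: y).
rewrite !ipDl !ipDr !ipZl !ipZr in H1 H2.
have Hx := ipIm x; have Hy := ipIm y.
move: H1 H2 Hx Hy.
case: (ip x x) => a1 b1; case: (ip y y) => a2 b2.
case: (ip x y) => a3 b3; case: (ip y x) => a4 b4.
rewrite !lecE /= => /andP[/eqP H1 _] /andP[/eqP H2 _] Hx Hy.
apply/eqP; rewrite eq_complex /=; apply/andP; split; apply/eqP.
  by move: H2; rewrite Hx Hy => H2; lra.
by rewrite Hx Hy in H1; lra.
Qed.

Definition N x := Re (ip x x).
Definition nm x := Num.sqrt (N x).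

Lemma N_ge0 x : 0 <= N x.
Proof. by move: (ip_ge0 x); rewrite lecE => /andP[_]. Qed.
Lemma nm_ge0 x : 0 <= nm x. Proof. exact: sqrtr_ge0. Qed.
Lemma nm_sqr x : nm x ^+ 2 = N x. Proof. exact/sqr_sqrtr/N_ge0. Qed.

Lemma ipxx x : ip x x = (N x)%:C.
Proof. by have := ipIm x; rewrite /N; case: (ip x x) => a b /= ->. Qed.

Lemma N_D x y : N (x + y) = N x + N y + 2 * Re (ip x y).
Proof.
rewrite /N ipDl !ipDr (ip_herm x y).
case: (ip x x) => a1 b1; case: (ip y y) => a2 b2; case: (ip x y) => a3 b3 /=.
ring.
Qed.

Lemma N_N x : N (- x) = N x.
Proof. by rewrite /N ipNl ipNr opprK. Qed.

Lemma N_Z c x : N (c *: x) = (Normc.normc c) ^+ 2 * N x.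
Proof.
rewrite /N ipZl ipZr ipxx; case: c => a b /=.
rewrite sqr_sqrtr ?addr_ge0 ?sqr_ge0 //; ring.
Qed.

Lemma normc_ge0 (c : C) : 0 <= Normc.normc c.
Proof. by case: c => a b /=; apply: sqrtr_ge0. Qed.

Lemma nm_Z c x : nm (c *: x) = Normc.normc c * nm x.
Proof. by rewrite /nm N_Z sqrtrM ?sqr_ge0 // sqrtr_sqr ger0_norm // normc_ge0. Qed.

Lemma normc_real (r : R) : Normc.normc (r%:C) = `|r|.
Proof. by rewrite /= expr0n /= addr0 sqrtr_sqr. Qed.

Lemma nm_N x : nm (- x) = nm x. Proof. by rewrite /nm N_N. Qed.

Lemma Re_ip_real s t x y : Re (ip (s%:C *: x) (t%:C *: y)) = s * t * Re (ip x y).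
Proof. rewrite ipZl ipZr; case: (ip x y) => a b /=; ring. Qed.

Lemma quad_cs (a c p : R) : 0 <= a -> 0 <= c ->
  (forall s t, 0 <= s ^+ 2 * a + 2 * s * t * p + t ^+ 2 * c) ->
  p <= Num.sqrt a * Num.sqrt c.
Proof.
move=> a0 c0 H.
have ua := sqr_sqrtr a0; have vc := sqr_sqrtr c0.
have u0 := sqrtr_ge0 a; have v0 := sqrtr_ge0 c.
set u := Num.sqrt a in ua u0 *; set v := Num.sqrt c in vc v0 *.
have [ple|pgt] := lerP p 0; first by apply: le_trans ple (mulr_ge0 u0 v0).
have [uv0|uvgt] := eqVneq (u * v) 0.
  exfalso.
  move/eqP: uv0; rewrite mulf_eq0 => /orP[/eqP u00|/eqP v00].
    have a00 : a = 0 by rewrite -ua u00 expr0n.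
    have := H (- ((c + 1) / (2 * p))) 1.
    rewrite a00 mulr0 add0r mulr1 expr1n mul1r.
    have -> : 2 * - ((c + 1) / (2 * p)) * p = - (c + 1).
      by field; rewrite lt0r_neq0.
    lra.
  have c00 : c = 0 by rewrite -vc v00 expr0n.
  have := H 1 (- ((a + 1) / (2 * p))).
  rewrite c00 mulr0 addr0 expr1n mul1r mulr1.
  have -> : 2 * - ((a + 1) / (2 * p)) * p = - (a + 1).
    by field; rewrite lt0r_neq0.
  lra.
have uvp : 0 < u * v by rewrite lt_neqAle eq_sym uvgt mulr_ge0.
have := H v (- u); rewrite -ua -vc => H2.
have : u * v * p <= u * v * (u * v) by nra.
by rewrite ler_pM2l.
Qed.

Lemma cs_re x y : Re (ip x y) <= nm x * nm y.
Proof.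
apply: quad_cs; rewrite ?N_ge0 // => s t.
have := N_ge0 (s%:C *: x + t%:C *: y).
by rewrite N_D !N_Z Re_ip_real !normc_real !real_normK ?num_real //; lra.
Qed.

Lemma nm_D x y : nm (x + y) <= nm x + nm y.
Proof.
rewrite /nm -[X in _ <= X]ger0_norm ?addr_ge0 ?sqrtr_ge0 // -sqrtr_sqr.
rewrite ler_sqrt ?sqr_ge0 // N_D.
have := cs_re x y; rewrite /nm => H.
rewrite sqrrD !sqr_sqrtr ?N_ge0 //; lra.
Qed.

Lemma nm_B x y : nm (x - y) <= nm x + nm y.
Proof. by rewrite -(nm_N y) nm_D. Qed.

Lemma cs_abs x y : Normc.normc (ip x y) <= nm x * nm y.
Proof.
have := cs_re x ((ip x y)^*%C *: y).
rewrite ipZr nm_Z.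
have -> : Normc.normc (ip x y)^*%C = Normc.normc (ip x y).
  by case: (ip x y) => a b /=; rewrite sqrrN.
have n0 := normc_ge0 (ip x y).
have -> : Re ((ip x y)^*%C * ip x y) = Normc.normc (ip x y) ^+ 2.
  by case: (ip x y) => a b /=; rewrite sqr_sqrtr ?addr_ge0 ?sqr_ge0 //; ring.
have := mulr_ge0 (nm_ge0 x) (nm_ge0 y).
set n := Normc.normc _; set K := nm x * nm y => K0 H.
have : n * n <= n * K.
  by move: H; rewrite mulrCA.
have [->|npos] := eqVneq n 0; first by [].
by rewrite ler_pM2l // lt_neqAle eq_sym npos n0.
Qed.

Lemma ip1 z : ip 1 z = phi z.
Proof. by rewrite /ip s1 mul1r. Qed.

Lemma N_tau x : N (tau x) <= N x.
Proof. by move: (tC x); rewrite lecE => /andP[_]. Qed.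

Lemma nm_tau x : nm (tau x) <= nm x.
Proof. by rewrite /nm ler_sqrt ?N_ge0 // N_tau. Qed.

Lemma real_zero (d e : R) : 0 <= e -> (forall t, 2 * t * d <= t ^+ 2 * e) -> d = 0.
Proof.
move=> e0 H.
set t := d / (e + 1).
have dt : d = t * (e + 1) by rewrite /t mulfVK // lt0r_neq0 //; lra.
have := H t; rewrite dt => H2.
have : t ^+ 2 * (e + 2) <= 0 by lra.
have t2 : 0 <= t ^+ 2 by apply: sqr_ge0.
move=> H3.
have : t ^+ 2 = 0.
  apply/eqP; rewrite eq_le t2 andbT.
  have e2 : 0 < e + 2 by lra.
  by rewrite -(ler_pM2r e2) mul0r.
by move/eqP; rewrite sqrf_eq0 => /eqP ->; rewrite mul0r.
Qed.

Lemma Re_phi_tau x : Re (phi (tau x)) = Re (phi x).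
Proof.
apply/eqP; rewrite -subr_eq0; apply/eqP.
apply: (@real_zero _ (N x - N (tau x))); first by rewrite subr_ge0 N_tau.
move=> t.
have := N_tau (1 + t%:C *: x).
rewrite linearD /= linearZ /= t1 !N_D !N_Z !ipZr !ip1.
have -> : N 1 = 1 by rewrite /N ip1 p1.
rewrite !normc_real real_normK ?num_real //.
case: (phi x) => a b; case: (phi (tau x)) => c d /=.
lra.
Qed.

Lemma phi_tau x : phi (tau x) = phi x.
Proof.
apply/eqP; rewrite eq_complex Re_phi_tau eqxx /=.
have := Re_phi_tau ((- 'i%C) *: x).
rewrite linearZ /= !pZ.
by case: (phi x) => a b; case: (phi (tau x)) => c d /= H; apply/eqP; lra.
Qed.

Definition It k x := iter k tau x.
Lemma It_lin k : linear (It k).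
Proof.
rewrite /It; elim: k => [//|k IH] c x y /=.
by rewrite IH linearP.
Qed.
HB.instance Definition _ k := GRing.isLinear.Build C A A *:%R (It k) (It_lin k).

Lemma ItS k x : It k.+1 x = tau (It k x). Proof. by []. Qed.
Lemma ItSr k x : It k.+1 x = It k (tau x). Proof. exact: iterSr. Qed.
Lemma ItD j k x : It (j + k) x = It j (It k x). Proof. exact: iterD. Qed.

Lemma nm_It k x : nm (It k x) <= nm x.
Proof. elim: k => [//|k IH]; by rewrite ItS (le_trans (nm_tau _)). Qed.

Lemma phi_It k x : phi (It k x) = phi x.
Proof. elim: k => [//|k IH]; by rewrite ItS phi_tau. Qed.

Lemma It1 k : It k 1 = 1.
Proof. elim: k => [//|k IH]; by rewrite ItS IH t1. Qed.

Lemma It_alg k (c : C) : It k (c%:A) = c%:A.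
Proof. by rewrite linearZ /= It1. Qed.

Lemma N0 : N 0 = 0.
Proof. by rewrite /N /ip s0 mul0r raddf0. Qed.
Lemma nm0 : nm 0 = 0.
Proof. by rewrite /nm N0 sqrtr0. Qed.

Lemma nm_sum (I : Type) (r : seq I) (P : pred I) (F : I -> A) :
  nm (\sum_(i <- r | P i) F i) <= \sum_(i <- r | P i) nm (F i).
Proof.
apply: (big_rec2 (fun a b => nm a <= b)); first by rewrite nm0.
by move=> i a b _ H; apply: le_trans (nm_D _ _) _; rewrite lerD2l.
Qed.

Lemma nm_real r x : 0 <= r -> nm (r%:C *: x) = r * nm x.
Proof. by move=> r0; rewrite nm_Z normc_real ger0_norm. Qed.

Definition Sm n x := \sum_(j < n) It j x.
Lemma Sm_lin n : linear (Sm n).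
Proof.
move=> c x y; rewrite /Sm scaler_sumr -big_split; apply: eq_bigr => j _.
by rewrite linearP.
Qed.
HB.instance Definition _ n := GRing.isLinear.Build C A A *:%R (Sm n) (Sm_lin n).

Lemma Sm_tau n x : Sm n (tau x) - Sm n x = It n x - x.
Proof.
rewrite /Sm -sumrB.
under eq_bigr do rewrite -ItSr.
rewrite -(big_mkord xpredT (fun j => It j.+1 x - It j x)).
by rewrite telescope_sumr.
Qed.

Lemma nm_Sm_tau n x : nm (Sm n (tau x) - Sm n x) <= 2 * nm x.
Proof.
rewrite Sm_tau; apply: le_trans (nm_B _ _) _.
have := nm_It n x; lra.
Qed.

Lemma nm_Sm_It n k x : nm (Sm n (It k x) - Sm n x) <= 2 * k%:R * nm x.
Proof.
elim: k => [|k IH]; first by rewrite subrr nm0 mulr0 mul0r.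
have -> : Sm n (It k.+1 x) - Sm n x =
  (Sm n (tau (It k x)) - Sm n (It k x)) + (Sm n (It k x) - Sm n x).
  by rewrite ItS addrA subrK.
apply: le_trans (nm_D _ _) _.
have := nm_Sm_tau n (It k x); have := nm_It k x; have := nm_ge0 x.
rewrite -natr1; nra.
Qed.

Lemma nm_Sm n x : nm (Sm n x) <= n%:R * nm x.
Proof.
apply: le_trans (nm_sum _ _ _) _.
rewrite mulr_natl -[X in _ *+ X]card_ord -sumr_const.
by apply: ler_sum => j _; apply: nm_It.
Qed.

Definition Mn n x := (n%:R^-1 : R)%:C *: Sm n x.

Lemma nm_Mn n x : (0 < n)%N -> nm (Mn n x) <= nm x.
Proof.
move=> n0; rewrite /Mn nm_real ?invr_ge0 ?ler0n //.
have np : 0 < (n%:R : R) by rewrite ltr0n.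
rewrite ler_pdivrMl //; exact: nm_Sm.
Qed.

Lemma widen_sum (V : zmodType) (K1 K : nat) (F : nat -> V) : (K1 <= K)%N ->
  \sum_(k < K1) F k = \sum_(k < K) (if (k < K1)%N then F k else 0).
Proof. by move=> le; rewrite (big_ord_widen K F le) big_mkcond. Qed.

Section Conv.
Variable x0 : A.

Definition V K (w : nat -> R) := \sum_(k < K) (w k)%:C *: It k x0.
Definition good K (w : nat -> R) := (forall k, 0 <= w k) /\ \sum_(k < K) w k = 1.
Definition Sset : set R := fun r => exists K w, good K w /\ r = nm (V K w).
Definition cinf := inf Sset.

Lemma Sset_x0 : Sset (nm x0).
Proof.
exists 1%N, (fun _ => 1); split; first by split; rewrite // big_ord1.
by rewrite /V big_ord1 scale1r.
Qed.

Lemma Sset_lb : lbound Sset 0.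
Proof. by move=> r [K [w [_ ->]]]; apply: nm_ge0. Qed.

Lemma Sset_inf : has_inf Sset.
Proof. by split; [exists (nm x0); apply: Sset_x0 | exists 0; apply: Sset_lb]. Qed.

Lemma cinf_le r : Sset r -> cinf <= r.
Proof. by move=> Sr; apply: ge_inf => //; exists 0; apply: Sset_lb. Qed.

Lemma cinf_ge0 : 0 <= cinf.
Proof. by apply: lb_le_inf; [exists (nm x0); apply: Sset_x0 | apply: Sset_lb]. Qed.

Lemma Mn_in n : (0 < n)%N -> Sset (nm (Mn n x0)).
Proof.
move=> n0; exists n, (fun _ => n%:R^-1); split.
  split=> [k|]; first by rewrite invr_ge0 ler0n.
  by rewrite sumr_const card_ord -[X in X = _]mulr_natr mulVf // pnatr_eq0 -lt0n.
by rewrite /Mn /V /Sm scaler_sumr.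
Qed.

Lemma scale_if (b : bool) (a : R) (z : A) :
  (if b then a else 0)%:C *: z = if b then a%:C *: z else 0.
Proof. by case: b => //; rewrite scale0r. Qed.

Lemma mid_in K1 w1 K2 w2 : good K1 w1 -> good K2 w2 ->
  Sset (nm ((2^-1 : R)%:C *: (V K1 w1 + V K2 w2))).
Proof.
move=> [w10 w11] [w20 w21].
exists (K1 + K2)%N,
  (fun k => ((if (k < K1)%N then w1 k else 0) + (if (k < K2)%N then w2 k else 0)) / 2).
split; first split.
- move=> k; apply: mulr_ge0; last by rewrite invr_ge0.
  by apply: addr_ge0; case: ifP.
- rewrite -mulr_suml big_split /= -!widen_sum ?leq_addr ?leq_addl // w11 w21.
  by field.
rewrite /V (@widen_sum _ K1 (K1 + K2) (fun k => (w1 k)%:C *: It k x0)) ?leq_addr //.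
rewrite (@widen_sum _ K2 (K1 + K2) (fun k => (w2 k)%:C *: It k x0)) ?leq_addl //.
rewrite -big_split scaler_sumr /=.
congr nm; apply: eq_bigr => k _.
rewrite -!scale_if -scalerDl scalerA; congr (_ *: _).
set a := (if _ then _ else _); set b := (if _ then _ else _).
by apply/eqP; rewrite eq_complex /=; apply/andP; split; apply/eqP; ring.
Qed.

Lemma keyA K w n : good K w -> (0 < n)%N ->
  nm (Mn n x0) <= nm (V K w) + 2 * K%:R * nm x0 / n%:R.
Proof.
move=> [w0 w1] n0.
have np : 0 < (n%:R : R) by rewrite ltr0n.
set y := V K w.
have E : Sm n y - Sm n x0 =
    \sum_(k < K) (w k)%:C *: (Sm n (It k x0) - Sm n x0).
  rewrite /y /V linear_sum /=.
  under [RHS]eq_bigr do rewrite scalerBr.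
  rewrite sumrB -scaler_suml -rmorph_sum /= w1 scale1r; congr (_ - _).
  by apply: eq_bigr => k _; rewrite linearZ.
have B1 : nm (Sm n y - Sm n x0) <= 2 * K%:R * nm x0.
  rewrite E; apply: le_trans (nm_sum _ _ _) _.
  apply: (@le_trans _ _ (\sum_(k < K) w k * (2 * K%:R * nm x0))).
    apply: ler_sum => k _; rewrite nm_real //.
    apply: ler_wpM2l => //; apply: le_trans (nm_Sm_It _ _ _) _.
    apply: ler_wpM2r; first exact: nm_ge0.
    by rewrite ler_pM2l ?ltr0n // ler_nat ltnW.
  by rewrite -mulr_suml w1 mul1r.
have -> : Mn n x0 = Mn n y - (Mn n y - Mn n x0) by rewrite opprB addrC subrK.
apply: le_trans (nm_B _ _) _; apply: lerD; first exact: nm_Mn.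
rewrite /Mn -scalerBr nm_real ?invr_ge0 ?ler0n // mulrC.
by rewrite ler_pM2r ?invr_gt0.
Qed.


Lemma Mn_V n : (0 < n)%N -> good n (fun _ => n%:R^-1) /\ Mn n x0 = V n (fun _ => n%:R^-1).
Proof.
move=> n0; split; last by rewrite /Mn /V /Sm scaler_sumr.
split=> [k|]; first by rewrite invr_ge0 ler0n.
by rewrite sumr_const card_ord -[X in X = _]mulr_natr mulVf // pnatr_eq0 -lt0n.
Qed.

Lemma para u v : N (u - v) = 2 * N u + 2 * N v - 4 * N ((2^-1 : R)%:C *: (u + v)).
Proof.
rewrite N_Z normc_real !N_D N_N ipNr.
have -> : `|2^-1 : R| ^+ 2 = 4^-1.
  by rewrite ger0_norm ?invr_ge0 // expr2; field.
case: (ip u v) => a b /=; by field.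
Qed.

Lemma cauchy_M e : 0 < e -> exists N0, forall m n, (N0 < m)%N -> (N0 < n)%N ->
  nm (Mn m x0 - Mn n x0) <= e.
Proof.
move=> e0.
have c0 := cinf_ge0; set c := cinf in c0 *.
set q := e ^+ 2 / (4 * (2 * c + 1)).
have q0 : 0 < q by apply: divr_gt0; [apply: exprn_gt0 | lra].
have qE : q * (4 * (2 * c + 1)) = e ^+ 2 by rewrite /q mulfVK //; apply: lt0r_neq0; lra.
set d := Num.min 1 q.
have d1 : d <= 1 by rewrite ge_min lexx.
have dq : d <= q by rewrite ge_min lexx orbT.
have d0 : 0 < d by rewrite lt_min ltr01 q0.
have [r [K [w [gw rE]]] hr] := inf_adherent (@divr_gt0 _ d 2 d0 (ltr0Sn _ 1)) Sset_inf.
rewrite -/cinf -/c in hr.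
have x00 := nm_ge0 x0.
set B := 4 * K%:R * nm x0 / d.
have B0 : 0 <= B by rewrite /B; apply: divr_ge0; [apply: mulr_ge0; [apply: mulr_ge0; [lra|apply: ler0n]|done]|lra].
exists (Num.bound B) => m n hm hn.
have hM : forall k, (Num.bound B < k)%N -> nm (Mn k x0) <= c + d.
  move=> k hk.
  have k0 : (0 < k)%N by apply: leq_ltn_trans hk.
  have kp : 0 < (k%:R : R) by rewrite ltr0n.
  have Bk : B < k%:R.
    apply: lt_le_trans (archi_boundP B0) _; rewrite ler_nat; exact: ltnW.
  have := keyA gw k0; rewrite -rE.
  have : 2 * K%:R * nm x0 / k%:R <= d / 2.
    rewrite ler_pdivrMr //.
    move: Bk; rewrite /B ltr_pdivrMr // => Bk.
    nra.
  lra.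
have [gm Em] := Mn_V (leq_ltn_trans (leq0n _) hm).
have [gn En] := Mn_V (leq_ltn_trans (leq0n _) hn).
have hmid := cinf_le (mid_in gm gn); rewrite -Em -En -/c in hmid.
have h1 := hM m hm; have h2 := hM n hn.
have Hmid2 : c ^+ 2 <= N ((2^-1 : R)%:C *: (Mn m x0 + Mn n x0)).
  rewrite -nm_sqr; have := nm_ge0 ((2^-1 : R)%:C *: (Mn m x0 + Mn n x0)); nra.
have Hu : N (Mn m x0) <= (c + d) ^+ 2.
  rewrite -nm_sqr; have := nm_ge0 (Mn m x0); nra.
have Hv : N (Mn n x0) <= (c + d) ^+ 2.
  rewrite -nm_sqr; have := nm_ge0 (Mn n x0); nra.
have HN : N (Mn m x0 - Mn n x0) <= e ^+ 2.
  rewrite para -qE; nra.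
rewrite /nm -(ger0_norm (ltW e0)) -sqrtr_sqr ler_sqrt //; exact: sqr_ge0.
Qed.

End Conv.

Lemma tau_Sm n x : tau (Sm n x) = Sm n (tau x).
Proof. by rewrite /Sm linear_sum; apply: eq_bigr => j _; rewrite -ItSr. Qed.

Lemma tau_Mn n x : (0 < n)%N -> nm (tau (Mn n x) - Mn n x) <= 2 * nm x / n%:R.
Proof.
move=> n0; have np : 0 < (n%:R : R) by rewrite ltr0n.
rewrite /Mn linearZ /= tau_Sm -scalerBr nm_real ?invr_ge0 ?ler0n //.
rewrite mulrC ler_pM2r ?invr_gt0 //; exact: nm_Sm_tau.
Qed.

Lemma phi_alg (c : C) : phi (c%:A) = c.
Proof. by rewrite pZ p1 mulr1. Qed.

Lemma phi_Mn n x : (0 < n)%N -> phi (Mn n x) = phi x.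
Proof.
move=> n0; rewrite /Mn pZ /Sm linear_sum /=.
under eq_bigr do rewrite phi_It.
rewrite sumr_const card_ord mulrnAr -mulrnAl -rmorphMn /=.
rewrite -[X in X%:C]mulr_natr mulVf ?pnatr_eq0 -?lt0n //.
by rewrite rmorph1 mul1r.
Qed.

Lemma nm1 : nm 1 = 1.
Proof. by rewrite /nm /N ip1 p1 /= sqrtr1. Qed.

Lemma normc_phi z : Normc.normc (phi z) <= nm z.
Proof. by rewrite -ip1; apply: le_trans (cs_abs _ _) _; rewrite nm1 mul1r. Qed.

Lemma normc_sum (I : Type) (r : seq I) (P : pred I) (F : I -> C) :
  Normc.normc (\sum_(i <- r | P i) F i) <= \sum_(i <- r | P i) Normc.normc (F i).
Proof.
apply: (big_rec2 (fun a b => Normc.normc a <= b)); first by rewrite Normc.normc0.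
by move=> i a b _ H; apply: le_trans (le_normcD _ _) _; rewrite lerD2l.
Qed.

Lemma small0 (r : R) : 0 <= r -> (forall e, 0 < e -> r <= e) -> r = 0.
Proof.
move=> r0 H; apply/eqP; rewrite eq_le r0 andbT.
rewrite leNgt; apply/negP => rp.
have := H (r / 2) (divr_gt0 rp (ltr0Sn _ 1)); lra.
Qed.


Lemma main_sec (Herg : ergodic star phi tau) (a b : A) (eps : R) (Heps : 0 < eps) :
  rel_dense_pos (fun k : nat =>
    (0 < k)%N /\ cabs (phi (a * iter k tau b)) > cabs (phi a * phi b) - eps).
Proof.
rewrite /cabs.
set Ka := nm (star a).
have Ka0 : 0 <= Ka := nm_ge0 _.
set e := eps / (Ka + 1).
have e0 : 0 < e by apply: divr_gt0 => //; lra.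
have Kae : Ka * e < eps.
  rewrite /e mulrA ltr_pdivrMr; last lra.
  nra.
have H1 : forall e', 0 < e' -> exists N0 : nat, forall n : nat, (N0 < n)%N ->
    phinorm star phi (tau (Mn n b) - Mn n b) <= e'.
  move=> e' e'0.
  have B0 : 0 <= 2 * nm b / e'.
    by apply: divr_ge0; [apply: mulr_ge0; [lra | apply: nm_ge0] | lra].
  exists (Num.bound (2 * nm b / e')) => n hn.
  have n0 : (0 < n)%N by apply: leq_ltn_trans hn.
  have np : 0 < (n%:R : R) by rewrite ltr0n.
  change (nm (tau (Mn n b) - Mn n b) <= e').
  apply: le_trans (tau_Mn b n0) _.
  rewrite ler_pdivrMr //.
  have := archi_boundP B0; rewrite ltr_pdivrMr // => Hb.
  have : (Num.bound (2 * nm b / e'))%:R <= (n%:R : R) by rewrite ler_nat ltnW.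
  nra.
have H2 : forall e', 0 < e' -> exists N0 : nat, forall m n : nat,
    (N0 < m)%N -> (N0 < n)%N -> phinorm star phi (Mn m b - Mn n b) <= e'.
  by move=> e' e'0; exact: (cauchy_M b e'0).
have [al Hal] := Herg _ H1 H2.
have alE : al = phi b.
  apply/eqP; rewrite -subr_eq0; apply/eqP; apply: Normc.eq0_normc.
  apply: small0; first exact: normc_ge0.
  move=> e' e'0; have [N0 HN] := Hal e' e'0.
  apply: (le_trans _ (HN N0.+1 (ltnSn N0))).
  have -> : al - phi b = - phi (Mn N0.+1 b - al%:A).
    by rewrite raddfB /= phi_Mn // phi_alg opprB.
  by rewrite normcN; apply: normc_phi.
have [N0 HN] := Hal e e0.
exists N0.+1; split => // j j0.
case: (boolP [exists i : 'I_N0.+1,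
   Normc.normc (phi a * phi b) - eps < Normc.normc (phi (a * iter (j + i) tau b))]).
  move/existsP => [i Hi]; exists (j + i); split.
    by split => //; rewrite addn_gt0 j0.
  split; first exact: leq_addr.
  have := ltn_ord i; lia.
move/existsPn => Hall; exfalso.
set L := Normc.normc (phi a * phi b).
have Hle : forall i : 'I_N0.+1, Normc.normc (phi (a * It (j + i) b)) <= L - eps.
  by move=> i; rewrite leNgt; exact: Hall i.
set z := phi (a * It j (Mn N0.+1 b)).
have zE : z = ((N0.+1%:R : R)^-1)%:C * \sum_(i < N0.+1) phi (a * It (j + i) b).
  rewrite /z /Mn linearZ /= -scalerAr pZ /Sm linear_sum /= mulr_sumr linear_sum /=.
  by congr (_ * _); apply: eq_bigr => i _; rewrite ItD.
have np : 0 < (N0.+1%:R : R) by rewrite ltr0n.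
have zb : Normc.normc z <= L - eps.
  rewrite zE Normc.normcM normc_real ger0_norm ?invr_ge0 ?ler0n // mulrC.
  rewrite ler_pdivrMr //.
  apply: le_trans (normc_sum _ _ _) _.
  apply: (@le_trans _ _ (\sum_(i < N0.+1) (L - eps))).
    by apply: ler_sum => i _; apply: Hle.
  by rewrite sumr_const card_ord mulr_natr.
have zd : Normc.normc (z - phi a * phi b) <= Ka * e.
  have -> : z - phi a * phi b = ip (star a) (It j (Mn N0.+1 b - (phi b)%:A)).
    by rewrite /ip sK linearB /= It_alg mulrBr raddfB /= mulr_algr pZ mulrC.
  apply: le_trans (cs_abs _ _) _; apply: ler_wpM2l => //.
  apply: le_trans (nm_It _ _) _; rewrite -alE; exact: HN N0.+1 (ltnSn N0).
have tri := le_normcD z (phi a * phi b - z).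
rewrite [z + _]addrC subrK -opprB normcN -/L in tri.
lra.
Qed.

End S.

Theorem theorem4p2 (R : realType) (A : algType R[i])
    (star : A -> A) (phi : A -> R[i]) (tau : A -> A)
    (Hdyn : is_star_dyn star phi tau) (Herg : ergodic star phi tau)
    (a b : A) (eps : R) (Heps : 0 < eps) :
  rel_dense_pos (fun k : nat =>
    (0 < k)%N /\
    cabs (phi (a * iter k tau b)) > cabs (phi a * phi b) - eps).
Proof. exact: (main_sec Hdyn Herg a b Heps). Qed.
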